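(* Let $N$ be a one-dimensional homogeneous $S^{1}$-space, $k\geq2$, $\omega$ an $S^{1}$-invariant volume form on $N\times\mathbb{R}^{k}$ (with $S^{1}$ acting via the first factor), $X$ the vector field on $N\times\mathbb{R}^{k}$ generating the $S^{1}$-action, and $h$ a non-constant smooth function on $N\times\mathbb{R}^{k}$ with $X(h)=0$. Then there exists a compactly supported smooth vector field $Y$ on $N\times\mathbb{R}^{k}$ with $\operatorname{div}_{\omega}(Y)=0$ and $[X,Y]=0$ such that $Y(h)$ is not identically zero.
   Context: A one-dimensional homogeneous $S^{1}$-space is a quotient $S^{1}/H$ by a closed subgroup $H$ with $\dim S^{1}/H=1$. For a volume form $\omega$ the divergence is defined by $\operatorname{div}_{\omega}(Y)\,\omega=L_{Y}\omega=d(i_{Y}\omega)$. *)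

(* Defs.v *)
From HB Require Import structures.
From mathcomp Require Import all_boot all_order all_algebra.
From mathcomp Require Import all_classical all_reals all_analysis.
Set Implicit Arguments. Unset Strict Implicit. Unset Printing Implicit Defensive.
Import Order.TTheory GRing.Theory Num.Theory.
Import numFieldNormedType.Exports.
Local Open Scope ring_scope.

(* N = S^1/H with H closed and dim N = 1, i.e. H finite cyclic of order m >= 1,
   N = R / (2 pi / m) Z, with S^1 = R / 2 pi Z acting by translation.
   A point of N x R^k is represented by z : 'rV[R]_(k.+1), coordinate 0 being the
   angle theta and coordinates 1..k the R^k-part. Functions/vector fields on
   N x R^k are functions on 'rV_(k.+1) that are periodic in theta with period
   2 pi / m. A vector field is a map 'rV_(k.+1) -> 'rV_(k.+1) (its components in
   the coordinate frame d/dtheta, d/dx_1, ..., d/dx_k). *)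

Section Defs.
Variables (R : realType) (n : nat).
Notation V := 'rV[R]_n.

Definition ev (i : 'I_n) : V := \row_(j < n) (i == j)%:R.

Fixpoint iter_partial (l : seq 'I_n) (f : V -> R) : V -> R :=
  match l with
  | [::] => f
  | i :: l' => fun x => 'D_(ev i) (iter_partial l' f) x
  end.

Definition smooth (f : V -> R) : Prop :=
  forall (l : seq 'I_n) (x : V), differentiable (iter_partial l f) x.

Definition smooth_vf (Y : V -> V) : Prop :=
  forall j : 'I_n, smooth (fun z => Y z 0 j).

Definition vf_app (Y : V -> V) (h : V -> R) : V -> R :=
  fun z => \sum_(i < n) Y z 0 i * 'D_(ev i) h z.

Definition lie (X Y : V -> V) : V -> V :=
  fun z => \row_(j < n) (vf_app X (fun w => Y w 0 j) z
                         - vf_app Y (fun w => X w 0 j) z).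

(* divergence w.r.t. the volume form  rho dtheta /\ dx_1 /\ ... /\ dx_k :
   L_Y omega = d(i_Y omega) = (sum_j d_j (rho Y_j)) dtheta /\ dx,
   so div_omega Y = (1/rho) sum_j d_j (rho Y_j). *)
Definition divergence (rho : V -> R) (Y : V -> V) : V -> R :=
  fun z => (\sum_(j < n) 'D_(ev j) (fun w => rho w * Y w 0 j) z) / rho z.

End Defs.
Arguments ev {R n}.
Arguments iter_partial {R n}.
Arguments smooth {R n}.
Arguments smooth_vf {R n}.
Arguments vf_app {R n}.
Arguments lie {R n}.
Arguments divergence {R n}.

Section Circle.
Variables (R : realType) (k : nat).
Notation V := 'rV[R]_(k.+1).

Definition period (m : nat) : R := 2 * pi / m%:R.

Definition periodic_fun (m : nat) (f : V -> R) : Prop :=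
  forall z : V, f (z + period m *: ev 0) = f z.

Definition periodic_vf (m : nat) (Y : V -> V) : Prop :=
  forall z : V, Y (z + period m *: ev 0) = Y z.

Definition act (t : R) (z : V) : V := z + t *: ev 0.

Definition gen : V -> V := fun z => 'D_1 (fun t : R => act t z) 0.

(* support contained in N x [-B, B]^k, i.e. compact support on N x R^k *)
Definition compactly_supported (Y : V -> V) : Prop :=
  exists B : R, forall z : V,
    (exists i : 'I_(k.+1), (i != 0) && (B < `|z 0 i|)) -> Y z = 0.

(* S^1-invariant volume form omega = rho dtheta /\ dx_1 /\ ... /\ dx_k
   on N x R^k *)
Definition inv_volume_density (m : nat) (rho : V -> R) : Prop :=
  [/\ smooth rho, periodic_fun m rho, forall z, rho z != 0
    & forall t z, rho (act t z) = rho z].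

End Circle.

(* Main.v *)
Require Import Defs.
From HB Require Import structures.
From mathcomp Require Import all_boot all_order all_algebra.
From mathcomp Require Import all_classical all_reals all_analysis.
From mathcomp Require Import ring lra.
Set Implicit Arguments. Unset Strict Implicit. Unset Printing Implicit Defensive.
Import Order.TTheory GRing.Theory Num.Theory.
Import numFieldNormedType.Exports.
Local Open Scope classical_set_scope.
Local Open Scope ring_scope.
Section G.
Variable R : realType.
Definition Gf (n : nat) (x : R) : R := if 0 < x then x^-1 ^+ n * expR (- x^-1) else 0.

Lemma G_bound n (h : R) : `|h^-1 * Gf n h| <= (n.+2)`!%:R * `|h|.
Proof.
rewrite /Gf; case: ifP => h0; last by rewrite mulr0 normr0 mulr_ge0.
set y := h^-1.
have y0 : 0 < y by rewrite invr_gt0.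
have hy : h = y^-1 by rewrite invrK.
have := expR_ge1Dxn n.+1 (ltW y0).
set C := (n.+2)`!%:R.
have C0 : 0 < C by rewrite ltr0n fact_gt0.
move=> hb.
have hb' : y ^+ n.+2 <= C * expR y.
  rewrite -ler_pdivrMl // mulrC; lra.
have pos : 0 < y * (y ^+ n * expR (- y)) by rewrite !mulr_gt0 ?exprn_gt0 ?expR_gt0.
rewrite hy (gtr0_norm pos) (@gtr0_norm _ y^-1) ?invr_gt0 //.
rewrite mulrA -exprS expRN.
rewrite ler_pdivrMr ?expR_gt0 //.
rewrite mulrAC ler_pdivlMr // -exprSr.
exact: hb'.
Qed.
Lemma Gform_derive n (x : R) : 0 < x ->
  is_derive x (1:R) (fun y : R => y^-1 ^+ n * expR (- y^-1))
   (- n%:R * (x^-1 ^+ n.+1 * expR (- x^-1)) + x^-1 ^+ n.+2 * expR (- x^-1)).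
Proof.
move=> x0.
have hi : is_derive x (1:R) (fun y : R => y^-1) (- x ^- 2 *: 1).
  by apply: is_deriveV; first by rewrite gt_eqF.
have he : is_derive x (1:R) (fun y : R => expR (- y^-1)) (expR (- x^-1) * - (- x ^- 2 *: 1)).
  exact: (is_derive1_comp (f := fun y => expR y) (g := fun y => - y^-1)).
have hM := is_deriveM (is_deriveX n hi) he.
have -> : (fun y : R => y^-1 ^+ n * expR (- y^-1)) = ((fun y : R => y^-1) ^+ n * (fun y : R => expR (- y^-1))).
  by apply/funext => y; rewrite /= exprfctE.
apply: (is_derive_eq hM).
rewrite /= exprfctE /= -exprVn.
set y := x^-1; set e := expR (- y).
clear hM; case: n => [|n]; rewrite /= ?mul0r ?scale0r; rewrite /GRing.scale /=.
  by ring.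
rewrite !mulr1 -mulrN1.
rewrite !exprS. ring.
Qed.

Lemma G_is_derive n (x : R) :
  is_derive x (1:R) (Gf n) (- n%:R * Gf n.+1 x + Gf n.+2 x).
Proof.
have [x0|x0|->] := ltgtP x 0.
- have -> : - n%:R * Gf n.+1 x + Gf n.+2 x = 0 by rewrite /Gf ltNge ltW // mulr0 addr0.
  apply: (@near_eq_is_derive _ _ _ (cst 0)).
  near=> y; rewrite /Gf /= ltNge ltW //.
  by near: y; exact: lt_nbhsl.
- have -> : - n%:R * Gf n.+1 x + Gf n.+2 x =
    (- n%:R * (x^-1 ^+ n.+1 * expR (- x^-1)) + x^-1 ^+ n.+2 * expR (- x^-1)).
    by rewrite /Gf x0.
  apply: (near_eq_is_derive _ (Gform_derive n x0)).
  near=> y; rewrite /Gf ifT //.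
  rewrite -oppr_lt0; near: y; apply: Nlt_nbhsl; by rewrite oppr_lt0.
- have -> : - n%:R * Gf n.+1 0 + Gf n.+2 0 = 0 by rewrite /Gf ltxx mulr0 addr0.
  pose C : R := (n.+2)`!%:R.
  have C0 : 0 < C :> R by rewrite ltr0n fact_gt0.
  have L : (fun h : R => h^-1 *: (Gf n (h *: 1 + 0) - Gf n 0)) @ 0^' --> (0:R).
    apply/cvgr0Pnorm_lt => e e0.
    have Ce : 0 < e / C by rewrite divr_gt0.
    near=> h.
    rewrite {2}/Gf ltxx subr0 addr0.
    have -> : h *: (1:R) = h by rewrite /GRing.scale /= mulr1.
    apply: le_lt_trans (G_bound n h) _.
    rewrite mulrC -ltr_pdivlMr //.
    by near: h; exact: dnbhs0_lt.
  apply: DeriveDef; first exact: (cvgP _ L).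
  exact: cvg_lim L.
Unshelve. all: by end_near.
Qed.
End G.

Section S.
Variable R : realType.
Variable N : nat.
Notation V := 'rV[R]_N.

Lemma line_eq (F : V -> R) (z v : V) :
  (fun h : R => h^-1 *: ((F \o shift z) (h *: v) - F z)) =
  (fun h : R => h^-1 *: (((fun t : R => F (z + t *: v)) \o shift 0) (h *: 1) - (fun t : R => F (z + t *: v)) 0)).
Proof.
apply/funext => h /=.
by rewrite scale0r !addr0 (addrC z) [h%:A]mulr1.
Qed.

Lemma derive_line (F : V -> R) (z v : V) :
  'D_v F z = 'D_1 (fun t : R => F (z + t *: v)) 0.
Proof. by rewrite /derive line_eq. Qed.

Lemma derivable_line (F : V -> R) (z v : V) :
  derivable F z v <-> derivable (fun t : R => F (z + t *: v)) 0 1.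
Proof. by rewrite /derivable line_eq. Qed.

Lemma ev_coord (i j : 'I_N) : (ev j : V) 0 i = (j == i)%:R.
Proof. by rewrite /ev mxE. Qed.

Lemma coord_line (z : V) (t : R) i j : (z + t *: ev j) 0 i = z 0 i + t * (j == i)%:R.
Proof. by rewrite !mxE. Qed.

Lemma deriveD' (f g : V -> R) z v : derivable f z v -> derivable g z v ->
  'D_v (fun y => f y + g y) z = 'D_v f z + 'D_v g z.
Proof. exact: deriveD. Qed.

Lemma deriveM' (f g : V -> R) z v : derivable f z v -> derivable g z v ->
  'D_v (fun y => f y * g y) z = f z * 'D_v g z + g z * 'D_v f z.
Proof. exact: deriveM. Qed.

Lemma derive_aff (b c : R) : 'D_1 (fun t : R => b + t * c) 0 = c.
Proof.
have -> : (fun t : R => b + t * c) = cst b + c \*: id.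
  by apply/funext => t; rewrite /= mulrC.
have H : is_derive (0:R) (1:R) (cst b + c \*: id) (0 + c *: 1).
  exact: is_deriveD.
by case: H => _ ->; rewrite add0r [c%:A]mulr1.
Qed.


Lemma aff_derive (b c : R) : is_derive (0:R) (1:R) (cst b + c \*: id) (0 + c *: 1).
Proof. exact: is_deriveD. Qed.

Lemma derive_Gaff n (b c : R) :
  'D_1 (fun t : R => Gf n (b + t * c)) 0 = (- n%:R * Gf n.+1 b + Gf n.+2 b) * c.
Proof.
have -> : (fun t : R => Gf n (b + t * c)) = Gf n \o (cst b + c \*: id).
  by apply/funext => t; rewrite /= mulrC.
have H := is_derive1_comp (G_is_derive n ((cst b + c \*: id) 0)) (aff_derive b c).
case: H => _ ->.
have -> : (cst b + c \*: id) 0 = b.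
  by change (b + c *: (0:R) = b); rewrite scaler0 addr0.
by rewrite /= add0r [c%:A]mulr1.
Qed.

Inductive Q (rho : V -> R) : (V -> R) -> Prop :=
| Qsm f : smooth f -> Q rho f
| Qinv : Q rho (fun z => (rho z)^-1)
| Qcst c : Q rho (fun _ => c)
| Qcrd i : Q rho (fun z => z 0 i)
| QG n a s i : Q rho (fun z => Gf n (a + s * z 0 i))
| Qadd f g : Q rho f -> Q rho g -> Q rho (fun z => f z + g z)
| Qmul f g : Q rho f -> Q rho g -> Q rho (fun z => f z * g z).

Lemma iter_partial_cat (l1 l2 : seq 'I_N) (f : V -> R) :
  iter_partial (l1 ++ l2) f = iter_partial l1 (iter_partial l2 f).
Proof. by elim: l1 => //= i l1 ->. Qed.

Lemma smooth_der (f : V -> R) j : smooth f -> smooth (fun z => 'D_(ev j) f z).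
Proof.
move=> sf l x.
have -> : iter_partial l (fun z => 'D_(ev j) f z) = iter_partial (l ++ [:: j]) f.
  by rewrite iter_partial_cat.
exact: sf.
Qed.

Variable rho : V -> R.
Hypothesis srho : smooth rho.
Hypothesis rho0 : forall z, rho z != 0.

Lemma Q_diff f : Q rho f -> forall z, differentiable f z.
Proof.
elim => {f}.
- by move=> f sf z; exact: (sf [::] z).
- by move=> z; apply: differentiableV => //; exact: (srho [::] z).
- by move=> c z; exact: differentiable_cst.
- by move=> i z; exact: differentiable_coord.
- move=> n a s i z.
  apply: (@differentiable_comp _ _ _ _ (fun z : V => a + s * z 0 i) (Gf n)).
    apply: (differentiableD (differentiable_cst a z)).
    exact: (differentiableM (differentiable_cst s z) (differentiable_coord _ 0 i)).
  apply/derivable1_diffP.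
  by case: (G_is_derive n (a + s * z 0 i)).
- by move=> f g _ hf _ hg z; exact: (differentiableD (hf z) (hg z)).
- by move=> f g _ hf _ hg z; exact: (differentiableM (hf z) (hg z)).
Qed.


Lemma Q_der f : Q rho f -> forall j, Q rho (fun z => 'D_(ev j) f z).
Proof.
elim => {f}.
- by move=> f sf j; apply: Qsm; exact: smooth_der.
- move=> j.
  have -> : (fun z => 'D_(ev j) (fun y => (rho y)^-1) z) =
     (fun z => (-1 * ((rho z)^-1 * (rho z)^-1)) * 'D_(ev j) rho z).
    apply/funext => z; rewrite deriveV //; last first.
      by apply: diff_derivable; exact: (srho [::] z).
    by rewrite /GRing.scale /= -exprVn expr2 mulN1r.
  apply: Qmul; first by apply: Qmul; [exact: Qcst | apply: Qmul; exact: Qinv].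
  by apply: Qsm; exact: smooth_der.
- move=> c j.
  have -> : (fun z => 'D_(ev j) (fun _ : V => c) z) = (fun _ => 0).
    by apply/funext => z; exact: derive_cst.
  exact: Qcst.
- move=> i j.
  have -> : (fun z => 'D_(ev j) (fun w : V => w 0 i) z) = (fun _ => (j == i)%:R).
    apply/funext => z; rewrite derive_line.
    under eq_fun do rewrite coord_line.
    exact: derive_aff.
  exact: Qcst.
- move=> n a s i j.
  have -> : (fun z => 'D_(ev j) (fun w : V => Gf n (a + s * w 0 i)) z) =
    (fun z => (s * (j == i)%:R) * (- n%:R * Gf n.+1 (a + s * z 0 i) + Gf n.+2 (a + s * z 0 i))).
    apply/funext => z; rewrite derive_line.
    under eq_fun do rewrite coord_line mulrDr addrA mulrCA.
    by rewrite derive_Gaff mulrC.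
  apply: Qmul; first exact: Qcst.
  apply: Qadd; last exact: QG.
  by apply: Qmul; [exact: Qcst | exact: QG].
- move=> f g Hf IHf Hg IHg j.
  have -> : (fun z => 'D_(ev j) (fun y => f y + g y) z) =
     (fun z => 'D_(ev j) f z + 'D_(ev j) g z).
    apply/funext => z; rewrite deriveD' //; apply: diff_derivable;
    exact: Q_diff.
  by apply: Qadd; [exact: IHf | exact: IHg].
- move=> f g Hf IHf Hg IHg j.
  have -> : (fun z => 'D_(ev j) (fun y => f y * g y) z) =
     (fun z => f z * 'D_(ev j) g z + g z * 'D_(ev j) f z).
    apply/funext => z; rewrite deriveM' //; apply: diff_derivable;
    exact: Q_diff.
  by apply: Qadd; apply: Qmul.
Qed.

Lemma Q_smooth f : Q rho f -> smooth f.
Proof.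
move=> Hf l; suff : Q rho (iter_partial l f) by move=> H x; exact: Q_diff.
elim: l => //= i l IH.
exact: (Q_der IH i).
Qed.


Definition invd (d : 'I_N) (F : V -> R) := forall (z : V) (t : R), F (z + t *: ev d) = F z.

Lemma derive_shiftpt (F : V -> R) (v z u : V) :
  'D_v F (z + u) = 'D_v (fun w => F (w + u)) z.
Proof. by rewrite /derive; do 3 f_equal; apply/funext => h /=; rewrite addrA. Qed.

Lemma inv_D0 d F : invd d F -> forall z, 'D_(ev d) F z = 0.
Proof.
move=> H z; rewrite derive_line.
have -> : (fun t : R => F (z + t *: ev d)) = cst (F z) by apply/funext => t; exact: H.
exact: derive_cst.
Qed.

Lemma inv_der d F v : invd d F -> invd d (fun z => 'D_v F z).
Proof.
move=> H z t /=; rewrite derive_shiftpt.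
by rewrite (_ : (fun w => F (w + t *: ev d)) = F) //; apply/funext => w; exact: H.
Qed.

Lemma inv_fcoord d c (g : R -> R) : d != c -> invd d (fun z => g (z 0 c)).
Proof. by move=> dc z t; rewrite coord_line (negbTE dc) mulr0 addr0. Qed.

Lemma invM d F G : invd d F -> invd d G -> invd d (fun z => F z * G z).
Proof. by move=> HF HG z t; rewrite HF HG. Qed.

Lemma invN d F : invd d F -> invd d (fun z => - F z).
Proof. by move=> HF z t; rewrite HF. Qed.

Lemma inv_prod d (P : pred 'I_N) (F : 'I_N -> V -> R) :
  (forall c, P c -> invd d (F c)) -> invd d (fun z => \prod_(c < N | P c) F c z).
Proof. by move=> H z t; apply: eq_bigr => c Pc; exact: H. Qed.

Lemma D_vanish (d : 'I_N) (F : V -> R) (z : V) : (forall t : R, `|t| < 1 -> F (z + t *: ev d) = 0) ->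
  'D_(ev d) F z = 0.
Proof.
move=> H; rewrite derive_line.
rewrite (@near_eq_derive _ _ _ _ (cst 0)); first exact: derive_cst.
near=> t; rewrite /cst H; first by [].
near: t.
exact: (@pseudometric_normed_Zmodule.nbhs0_lt _ R 1).
Unshelve. all: by end_near.
Qed.

Lemma sum2 (F : 'I_N -> R) (i j : 'I_N) : i != j ->
  (forall c, c != i -> c != j -> F c = 0) -> \sum_(c < N) F c = F i + F j.
Proof.
move=> ij H; rewrite (bigD1 i) //= (bigD1 j) //= ?big1 ?addr0 //.
  by move=> c /andP[ci cj]; exact: H.
by rewrite eq_sym.
Qed.

Lemma ev_delta (c : 'I_N) : (ev c : V) = 'e_c.
Proof. by apply/rowP => d; rewrite !mxE eqxx /= eq_sym. Qed.

Lemma line_eq_at (F : V -> R) (z v : V) (x : R) :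
  (fun h : R => h^-1 *: ((F \o shift (z + x *: v)) (h *: v) - F (z + x *: v))) =
  (fun h : R => h^-1 *: (((fun t : R => F (z + t *: v)) \o shift x) (h *: 1) - (fun t : R => F (z + t *: v)) x)).
Proof.
apply/funext => h /=.
by rewrite [h *: (1:R)]mulr1 scalerDl addrCA addrA.
Qed.

Lemma const_of_D0 (F : V -> R) : (forall z, differentiable F z) ->
  (forall z c, 'D_(ev c) F z = 0) -> forall z1 z2, F z1 = F z2.
Proof.
move=> dF D0.
have Dv : forall w v, 'D_v F w = 0.
  move=> w v; rewrite deriveE // [v]row_sum_delta linear_sum big1 // => c _.
  by rewrite linearZ /= -ev_delta -deriveE // D0 scaler0.
move=> z1 z2.
pose g := fun t : R => F (z1 + t *: (z2 - z1)).
have : g 0 = g 1.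
  apply: is_derive_0_is_cst => x.
  apply: DeriveDef.
    rewrite /derivable -line_eq_at.
    exact: diff_derivable.
  by rewrite /derive -line_eq_at; exact: Dv.
by rewrite /g scale0r addr0 scale1r addrC subrK.
Qed.
End S.

Section Main.
Variable R : realType.
Variable k : nat.
Notation V := 'rV[R]_(k.+1).

Lemma gen_ev (z : V) : @gen R k z = ev 0.
Proof.
rewrite /gen /act.
have -> : (fun t : R => z + t *: ev 0) = cst z + ( *:%R^~ (ev 0 : V)) by apply/funext.
have H : is_diff (0:R) (cst z + ( *:%R^~ (ev 0 : V))) (0 + ( *:%R^~ (ev 0 : V))).
  exact: is_diffD.
rewrite deriveE; last by case: H.
case: H => _ ->.
by rewrite /= add0r scale1r.
Qed.

Lemma vf_gen (F : V -> R) z : vf_app (@gen R k) F z = 'D_(ev 0) F z.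
Proof.
rewrite /vf_app (bigD1 0) //= big1 ?addr0.
  by rewrite gen_ev ev_coord eqxx mul1r.
by move=> c c0; rewrite gen_ev ev_coord eq_sym (negbTE c0) mul0r.
Qed.

Variable z0 : V.
Variables i j : 'I_(k.+1).
Hypotheses (i0 : i != 0) (j0 : j != 0) (ij : i != j).
Variable rho : V -> R.
Hypotheses (srho : smooth rho) (rho0 : forall z, rho z != 0)
  (rinv : invd 0 rho).

Definition beta (c0 x : R) := Gf 0 ((1 - c0) + 1 * x) * Gf 0 ((1 + c0) + -1 * x).
Definition bump (c : 'I_(k.+1)) (z : V) := beta (z0 0 c) (z 0 c).
Definition Af (z : V) := bump i z.
Definition Bf (z : V) := (z 0 j - z0 0 j) * bump j z.
Definition Cf (z : V) := \prod_(c < k.+1 | (c != 0) && (c != i) && (c != j)) bump c z.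
Definition Ap (z : V) := 'D_(ev i) Af z.
Definition Bp (z : V) := 'D_(ev j) Bf z.
Definition si (z : V) := (Bp z * Cf z) * Af z.
Definition sj (z : V) := (- (Ap z * Cf z)) * Bf z.
Definition Yf (z : V) : V :=
  \row_c (if c == i then si z / rho z else if c == j then sj z / rho z else 0).

Lemma Q_bump c : Q rho (bump c).
Proof. by rewrite /bump /beta; apply: Qmul; apply: QG. Qed.

Lemma Q_Af : Q rho Af.
Proof. exact: Q_bump. Qed.

Lemma Q_Bf : Q rho Bf.
Proof.
rewrite /Bf; apply: Qmul; last exact: Q_bump.
by apply: Qadd; [exact: Qcrd | exact: Qcst].
Qed.

Lemma Q_prod (P : pred 'I_(k.+1)) (F : 'I_(k.+1) -> V -> R) :
  (forall c, P c -> Q rho (F c)) -> Q rho (fun z => \prod_(c < k.+1 | P c) F c z).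
Proof.
move=> H; rewrite /index_enum.
elim: (Finite.enum _) => [|c r IH].
  have -> : (fun z : V => \prod_(c <- [::] | P c) F c z) = (fun _ => 1).
    by apply/funext => z; rewrite big_nil.
  exact: Qcst.
case Pc : (P c).
  have -> : (fun z : V => \prod_(c0 <- c :: r | P c0) F c0 z) =
     (fun z => F c z * \prod_(c0 <- r | P c0) F c0 z).
    by apply/funext => z; rewrite big_cons Pc.
  by apply: Qmul => //; exact: H.
have -> : (fun z : V => \prod_(c0 <- c :: r | P c0) F c0 z) =
     (fun z => \prod_(c0 <- r | P c0) F c0 z).
  by apply/funext => z; rewrite big_cons Pc.
exact: IH.
Qed.

Lemma Q_Cf : Q rho Cf.
Proof. by apply: Q_prod => c _; exact: Q_bump. Qed.

Lemma Q_Ap : Q rho Ap.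
Proof. exact: (Q_der srho rho0 Q_Af). Qed.

Lemma Q_Bp : Q rho Bp.
Proof. exact: (Q_der srho rho0 Q_Bf). Qed.

Lemma Q_si : Q rho si.
Proof. by apply: Qmul; [apply: Qmul; [exact: Q_Bp | exact: Q_Cf] | exact: Q_Af]. Qed.

Lemma Q_nAC : Q rho (fun z => - (Ap z * Cf z)).
Proof.
have -> : (fun z => - (Ap z * Cf z)) = (fun z => (-1) * (Ap z * Cf z)).
  by apply/funext => z; rewrite mulN1r.
by apply: Qmul; [exact: Qcst | apply: Qmul; [exact: Q_Ap | exact: Q_Cf]].
Qed.

Lemma Q_sj : Q rho sj.
Proof. by apply: Qmul; [exact: Q_nAC | exact: Q_Bf]. Qed.

Lemma inv_bump d c : d != c -> invd d (bump c).
Proof. by move=> dc; exact: (@inv_fcoord _ _ d c (beta (z0 0 c))). Qed.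

Lemma inv_Cf d : (d == 0) || (d == i) || (d == j) -> invd d Cf.
Proof.
move=> hd; apply: inv_prod => c /andP[/andP[c0 ci] cj]; apply: inv_bump.
apply/eqP => dc; move: hd; rewrite dc (negbTE c0) (negbTE ci) (negbTE cj).
by [].
Qed.

Lemma inv_Af d : d != i -> invd d Af.
Proof. exact: inv_bump. Qed.

Lemma inv_Bf d : d != j -> invd d Bf.
Proof.
move=> dj; apply: invM; last exact: inv_bump.
exact: (@inv_fcoord _ _ d j (fun x => x - z0 0 j)).
Qed.

Lemma inv_Ap d : d != i -> invd d Ap.
Proof. by move=> di; apply: inv_der; exact: inv_Af. Qed.

Lemma inv_Bp d : d != j -> invd d Bp.
Proof. by move=> dj; apply: inv_der; exact: inv_Bf. Qed.

Lemma ji : j != i. Proof. by rewrite eq_sym. Qed.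
Lemma zi : (0 : 'I_(k.+1)) != i. Proof. by rewrite eq_sym. Qed.
Lemma zj : (0 : 'I_(k.+1)) != j. Proof. by rewrite eq_sym. Qed.

Lemma inv_si0 : invd 0 si.
Proof.
apply: invM; last exact: (inv_Af zi).
apply: invM; first exact: (inv_Bp zj).
by apply: inv_Cf; rewrite eqxx.
Qed.

Lemma inv_sj0 : invd 0 sj.
Proof.
apply: invM; last exact: (inv_Bf zj).
apply: invN; apply: invM; first exact: (inv_Ap zi).
by apply: inv_Cf; rewrite eqxx.
Qed.

Lemma invY c : invd 0 (fun z => Yf z 0 c).
Proof.
move=> z t; rewrite !mxE.
case: ifP => _; first by rewrite inv_si0 rinv.
case: ifP => _ //; by rewrite inv_sj0 rinv.
Qed.

Lemma rhoY c : (fun w => rho w * Yf w 0 c) =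
  if c == i then si else if c == j then sj else (fun _ => 0).
Proof.
case: ifP => ci; [|case: ifP => cj]; apply/funext => w; rewrite mxE ?ci ?cj.
- by rewrite mulrCA mulfV // mulr1.
- by rewrite mulrCA mulfV // mulr1.
- by rewrite mulr0.
Qed.

Lemma dQ f : Q rho f -> forall z v, derivable f z v.
Proof. by move=> Hf z v; apply: diff_derivable; exact: (Q_diff srho rho0 Hf). Qed.

Lemma div_Y z : divergence rho Yf z = 0.
Proof.
rewrite /divergence.
rewrite (sum2 (F := fun c => 'D_(ev c) (fun w => rho w * Yf w 0 c) z) ij); last first.
  by move=> c ci cj /=; rewrite rhoY (negbTE ci) (negbTE cj); exact: derive_cst.
rewrite /= !rhoY eqxx (negbTE ji) eqxx.
have d1 : derivable (fun z => Bp z * Cf z) z (ev i).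
  by apply: dQ; apply: Qmul; [exact: Q_Bp | exact: Q_Cf].
have d2 : derivable Af z (ev i) by apply: dQ; exact: Q_Af.
have e1 : 'D_(ev i) si z = (Bp z * Cf z) * Ap z.
  rewrite /si (deriveM' d1 d2).
  have -> : 'D_(ev i) (fun w => Bp w * Cf w) z = 0.
    apply: inv_D0; apply: invM; first exact: inv_Bp.
    by apply: inv_Cf; rewrite eqxx orbT.
  by rewrite mulr0 addr0.
have d3 : derivable (fun z => - (Ap z * Cf z)) z (ev j) by apply: dQ; exact: Q_nAC.
have d4 : derivable Bf z (ev j) by apply: dQ; exact: Q_Bf.
have e2 : 'D_(ev j) sj z = (- (Ap z * Cf z)) * Bp z.
  rewrite /sj (deriveM' d3 d4).
  have -> : 'D_(ev j) (fun w => - (Ap w * Cf w)) z = 0.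
    apply: inv_D0; apply: invN; apply: invM; first exact: inv_Ap ji.
    by apply: inv_Cf; rewrite eqxx !orbT.
  by rewrite mulr0 addr0.
rewrite e1 e2.
rewrite mulNr (_ : Ap z * Cf z * Bp z = Bp z * Cf z * Ap z); last by ring.
by rewrite subrr mul0r.
Qed.

Lemma Gf_nonpos n (x : R) : x <= 0 -> Gf n x = 0.
Proof. by move=> x0; rewrite /Gf ltNge x0. Qed.

Lemma bump_far c (w : V) : 1 <= `|w 0 c - z0 0 c| -> bump c w = 0.
Proof.
rewrite /bump /beta => H.
have [d0|d0] := lerP 0 (w 0 c - z0 0 c).
  move: H; rewrite ger0_norm // => H.
  by rewrite (@Gf_nonpos 0 ((1 + z0 0 c) + -1 * w 0 c)) ?mulr0 //; lra.
move: H; rewrite ltr0_norm // => H.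
by rewrite (@Gf_nonpos 0 ((1 - z0 0 c) + 1 * w 0 c)) ?mul0r //; lra.
Qed.

Definition far c (z : V) := 2 < `|z 0 c - z0 0 c|.

Lemma far_line c z t : far c z -> `|t| < 1 -> 1 <= `|(z + t *: ev c) 0 c - z0 0 c|.
Proof.
rewrite /far coord_line eqxx mulr1 => H1 H2.
have := ler_normD (z 0 c + t - z0 0 c) (- t).
rewrite normrN (_ : z 0 c + t - z0 0 c + - t = z 0 c - z0 0 c); last by ring.
lra.
Qed.

Lemma Af_far z : far i z -> Af z = 0.
Proof. by move=> H; apply: bump_far; rewrite /far in H; lra. Qed.

Lemma Ap_far z : far i z -> Ap z = 0.
Proof.
move=> H; apply: D_vanish => t ht; apply: bump_far; exact: far_line.
Qed.

Lemma Bf_far z : far j z -> Bf z = 0.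
Proof. by move=> H; rewrite /Bf bump_far ?mulr0 //; rewrite /far in H; lra. Qed.

Lemma Bp_far z : far j z -> Bp z = 0.
Proof.
move=> H; apply: D_vanish => t ht; rewrite /Bf bump_far ?mulr0 //; exact: far_line.
Qed.

Lemma Cf_far c z : c != 0 -> c != i -> c != j -> far c z -> Cf z = 0.
Proof.
move=> c0 ci cj H; rewrite /Cf (bigD1 c) /=; last by rewrite c0 ci cj.
by rewrite bump_far ?mul0r //; rewrite /far in H; lra.
Qed.

Lemma s_far c z : c != 0 -> far c z -> si z = 0 /\ sj z = 0.
Proof.
move=> c0 H; rewrite /si /sj.
have [ci|ci] := eqVneq c i.
  move: H; rewrite ci => H; rewrite Af_far // Ap_far //.
  by rewrite mulr0 mul0r oppr0 mul0r.
have [cj|cj] := eqVneq c j.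
  move: H; rewrite cj => H; rewrite Bf_far // Bp_far //.
  by rewrite mulr0 !mul0r.
by rewrite (Cf_far c0 ci cj H) !mulr0 !mul0r oppr0 mul0r.
Qed.

Lemma Yf_far c z : c != 0 -> far c z -> Yf z = 0.
Proof.
move=> c0 H; have [h1 h2] := s_far c0 H.
apply/rowP => d; rewrite !mxE h1 h2 mul0r.
by case: ifP => //; case: ifP.
Qed.

Lemma compact_Yf : compactly_supported Yf.
Proof.
exists (\sum_(c < k.+1) `|z0 0 c| + 2) => z [c /andP[c0 Hc]].
apply: (Yf_far c0); rewrite /far.
have h1 : `|z0 0 c| <= \sum_(c < k.+1) `|z0 0 c|.
  rewrite (bigD1 c) //= lerDl; exact: sumr_ge0.
have := lerB_dist (z 0 c) (z0 0 c).
lra.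
Qed.

Lemma smooth_Yf : smooth_vf Yf.
Proof.
move=> c.
have -> : (fun z => Yf z 0 c) =
  if c == i then (fun z => si z * (rho z)^-1)
  else if c == j then (fun z => sj z * (rho z)^-1) else (fun _ => 0).
  by case: ifP => ci; [|case: ifP => cj]; apply/funext => w; rewrite mxE ?ci ?cj.
apply: (Q_smooth srho rho0).
case: ifP => _; first by apply: Qmul; [exact: Q_si | exact: Qinv].
case: ifP => _; first by apply: Qmul; [exact: Q_sj | exact: Qinv].
exact: Qcst.
Qed.

Lemma periodic_Yf m : periodic_vf m Yf.
Proof. by move=> z; apply/rowP => c; exact: invY. Qed.

Lemma lie_Yf z : lie (@gen R k) Yf z = 0.
Proof.
apply/rowP => c; rewrite !mxE vf_gen inv_D0; last exact: invY.
rewrite /vf_app big1 ?subr0 // => d _.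
have -> : (fun w : V => @gen R k w 0 c) = cst ((ev 0 : V) 0 c).
  by apply/funext => w; rewrite gen_ev.
by rewrite derive_cst mulr0.
Qed.

Lemma bump_z0 c : bump c z0 != 0.
Proof.
rewrite /bump /beta.
have -> : (1 - z0 0 c) + 1 * z0 0 c = 1 by ring.
have -> : (1 + z0 0 c) + -1 * z0 0 c = 1 by ring.
by rewrite /Gf ltr01 expr0 mul1r mulf_neq0 // gt_eqF // expR_gt0.
Qed.

Lemma Bf_z0 : Bf z0 = 0.
Proof. by rewrite /Bf subrr mul0r. Qed.

Lemma derive_coord (z : V) c d : 'D_(ev d) (fun w : V => w 0 c) z = (d == c)%:R.
Proof.
rewrite derive_line.
under eq_fun do rewrite coord_line.
exact: derive_aff.
Qed.

Lemma Bp_z0 : Bp z0 = bump j z0.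
Proof.
rewrite /Bp /Bf deriveM'; first last.
- by apply: dQ; exact: Q_bump.
- by apply: dQ; apply: Qadd; [exact: Qcrd | exact: Qcst].
rewrite subrr mul0r add0r deriveD'; first last.
- by apply: dQ; exact: Qcst.
- by apply: dQ; exact: Qcrd.
by rewrite derive_coord eqxx derive_cst addr0 mulr1.
Qed.

Lemma si_z0 : si z0 != 0.
Proof.
rewrite /si Bp_z0; apply: mulf_neq0; last exact: bump_z0.
apply: mulf_neq0; first exact: bump_z0.
by rewrite /Cf; apply/prodf_neq0 => c _; exact: bump_z0.
Qed.

Lemma vf_Yf (h : V -> R) : 'D_(ev i) h z0 != 0 -> vf_app Yf h z0 != 0.
Proof.
move=> hD; rewrite /vf_app (sum2 (F := fun c => Yf z0 0 c * 'D_(ev c) h z0) ij); last first.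
  by move=> c ci cj /=; rewrite mxE (negbTE ci) (negbTE cj) mul0r.
rewrite /= !mxE eqxx (negbTE ji) eqxx /sj Bf_z0 mulr0 mul0r mul0r addr0.
apply: mulf_neq0 => //; apply: mulf_neq0; first exact: si_z0.
by rewrite invr_eq0.
Qed.

End Main.

Unset Implicit Arguments.
Local Close Scope classical_set_scope.

Theorem lemma3p4 (R : realType) (m k : nat) (hm : (0 < m)%N) (hk : (2 <= k)%N)
  (rho : 'rV[R]_(k.+1) -> R) (h : 'rV[R]_(k.+1) -> R) :
  inv_volume_density m rho ->
  smooth h -> periodic_fun m h ->
  (exists z1 z2, h z1 != h z2) ->
  (forall z, vf_app (@gen R k) h z = 0) ->
  exists Y : 'rV[R]_(k.+1) -> 'rV[R]_(k.+1),
    [/\ smooth_vf Y, periodic_vf m Y, compactly_supported Y,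
        forall z, divergence rho Y z = 0 &
        (forall z, lie (@gen R k) Y z = 0) /\ (exists z, vf_app Y h z != 0)].
Proof.
move=> [srho _ rho0 rinv'] sh _ [z1 [z2 hne]] hX.
have rinv : invd 0 rho by move=> z t; exact: (rinv' t z).
have [z0 [i [i0 hi]]] : exists z0 (i : 'I_(k.+1)), i != 0 /\ 'D_(ev i) h z0 != 0.
  case: (pselect (exists z0 (i : 'I_(k.+1)), i != 0 /\ 'D_(ev i) h z0 != 0)) => // nE.
  exfalso; move/eqP: hne; apply.
  apply: const_of_D0 => [z|z c]; first exact: (sh [::] z).
  have [->|c0] := eqVneq c 0; first by rewrite -vf_gen hX.
  apply/eqP; apply/negP => hc; apply: nE; exists z, c; split => //.
  by apply/negP.
have h1 : (1 < k.+1)%N by exact: leqW hk.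
have h2 : (2 < k.+1)%N by exact: hk.
pose j : 'I_(k.+1) := if i == inord 1 then inord 2 else inord 1.
have j0 : j != 0.
  rewrite /j; case: ifP => _; apply/eqP => /(congr1 val) /=; rewrite inordK //.
have ij : i != j.
  rewrite /j; case: ifP => hi1.
    move/eqP: hi1 => ->; apply/eqP => /(congr1 val) /=; rewrite !inordK //.
  by rewrite hi1.
exists (Yf z0 i j rho); split.
- exact: smooth_Yf.
- exact: periodic_Yf.
- exact: compact_Yf.
- by move=> z; apply: div_Y.
- split; first by move=> z; apply: lie_Yf.
  by exists z0; apply: vf_Yf.
Qed.
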